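(* Let $(G,c)$ be a metric TSP instance with $n\ge 3$ cities and let $T^*$ be a shortest tour. Then every 2-optimal tour $T'$ satisfies $c(T') \le \sqrt{n/2}\, c(T^* )$.
   Context: A metric TSP instance with $n$ cities consists of a complete undirected graph $G$ on $n$ vertices together with $c: E(G)\to\mathbb{R}_{\ge 0}$ satisfying the triangle inequality $c(x,y)+c(y,z)\ge c(x,z)$. A tour is a cycle containing all vertices; its length is the sum of its edge lengths. Tours are regarded as oriented cycles. A tour is 2-optimal if for all pairs of edges $(a,b),(x,y)$ of the oriented tour, $c(a,x)+c(b,y)\ge c(a,b)+c(x,y)$. *)

(* Defs.v *)
From HB Require Import structures.
From mathcomp Require Import all_boot all_order all_algebra all_fingroup.
Set Implicit Arguments. Unset Strict Implicit. Unset Printing Implicit Defensive.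
Import Order.TTheory GRing.Theory Num.Theory.
Local Open Scope ring_scope.

(* Cities are 'I_n.  A cost function is c : 'I_n -> 'I_n -> R; only its values
   on pairs of distinct cities (edges of the complete graph) are meaningful. *)
Definition metric_cost (R : realFieldType) (n : nat) (c : 'I_n -> 'I_n -> R) : Prop :=
  (forall x y : 'I_n, x != y -> 0 <= c x y) /\
  (forall x y : 'I_n, x != y -> c x y = c y x) /\
  (forall x y z : 'I_n, x != y -> y != z -> x != z -> c x z <= c x y + c y z).

(* An oriented tour is given by a permutation s : the cities are visited in the
   order s 0, s 1, ..., s (n-1), then back to s 0.  Edge i is (s i, s (i+1 mod n)). *)
Definition tour_len (R : realFieldType) (n : nat) (c : 'I_n -> 'I_n -> R)
  (s : 'S_n) : R := \sum_(i < n) c (s i) (s (ordS i)).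

Definition two_optimal (R : realFieldType) (n : nat) (c : 'I_n -> 'I_n -> R)
  (s : 'S_n) : Prop :=
  forall i j : 'I_n, i != j ->
    c (s i) (s (ordS i)) + c (s j) (s (ordS j)) <=
    c (s i) (s j) + c (s (ordS i)) (s (ordS j)).

(* Main.v *)
Require Import Defs.
From HB Require Import structures.
From mathcomp Require Import all_boot all_order all_algebra all_fingroup.
From mathcomp Require Import ring lra zify.
Set Implicit Arguments. Unset Strict Implicit. Unset Printing Implicit Defensive.
Import Order.TTheory GRing.Theory Num.Theory.
Local Open Scope ring_scope.
Definition phi (R : realFieldType) (r y : R) : R := Num.max (r - y) 0.

Lemma phiE (R : realFieldType) (r y : R) : (r - y <= 0 /\ phi r y = 0) \/ (0 <= r - y /\ phi r y = r - y).
Proof. rewrite /phi maxEle; case: lerP => h.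
  by left.
  by right; split => //; lra.
Qed.

Lemma one_side (R : realFieldType) (r s u : R) : s <= u ->
  phi r s ^+ 2 - phi r u ^+ 2 <= (u - s) * (phi r s + phi r u).
Proof.
move=> su; case: (phiE r s) => [[h1 ->]|[h1 ->]]; case: (phiE r u) => [[h2 ->]|[h2 ->]]; nra.
Qed.

Lemma interval_ineq (R : realFieldType) (r L s u hs hu : R) : s <= u ->
  phi r s + phi r (L - s) <= hs -> phi r u + phi r (L - u) <= hu ->
  (phi r s ^+ 2 - phi r (L - s) ^+ 2) - (phi r u ^+ 2 - phi r (L - u) ^+ 2)
   <= (u - s) * (hs + hu).
Proof.
move=> su h1 h2.
have A := one_side r su.
have B : L - u <= L - s by lra.
have B' : phi r (L - u) ^+ 2 - phi r (L - s) ^+ 2 <= (u - s) * (phi r (L - u) + phi r (L - s)).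
  by have := one_side r B; have -> : L - s - (L - u) = u - s by ring.
have C : (u - s) * (phi r s + phi r (L - s) + (phi r u + phi r (L - u))) <= (u - s) * (hs + hu).
  apply: ler_wpM2l; lra.
rewrite !mulrDr in A B' C *; lra.
Qed.

Lemma h_ge (R : realFieldType) (r L D t : R) : 0 <= r -> 2 * r <= L -> D <= t -> D <= L - t ->
  phi r t + phi r (L - t) <= phi r D.
Proof.
move=> r0 rL h1 h2.
case: (phiE r t) => [[a ->]|[a ->]]; case: (phiE r (L - t)) => [[b ->]|[b ->]];
 case: (phiE r D) => [[c ->]|[c ->]]; lra.
Qed.
Definition lenx (R : realFieldType) (T : Type) (d : T -> T -> R) (w : nat -> T) (k : nat) : R :=
  \sum_(i < k) d (w i) (w i.+1).

Lemma lenxS (R : realFieldType) (T : Type) (d : T -> T -> R) (w : nat -> T) k :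
  lenx d w k.+1 = lenx d w k + d (w k) (w k.+1).
Proof. by rewrite /lenx big_ord_recr. Qed.

Lemma lenx0 (R : realFieldType) (T : Type) (d : T -> T -> R) (w : nat -> T) :
  lenx d w 0 = 0.
Proof. by rewrite /lenx big_ord0. Qed.

Lemma path_le (R : realFieldType) (T : Type) (d : T -> T -> R) (w : nat -> T)
  (d0 : forall x, d x x = 0) (dtri : forall x y z, d x z <= d x y + d y z) j k :
  d (w j) (w (j + k)%N) <= lenx d w (j + k)%N - lenx d w j.
Proof.
elim: k => [|k IH]; first by rewrite addn0 d0 subrr.
rewrite addnS lenxS.
have := dtri (w j) (w (j + k)) (w (j + k).+1); lra.
Qed.

Lemma path_le' (R : realFieldType) (T : Type) (d : T -> T -> R) (w : nat -> T)
  (d0 : forall x, d x x = 0) (dtri : forall x y z, d x z <= d x y + d y z) j j' :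
  (j <= j')%N -> d (w j) (w j') <= lenx d w j' - lenx d w j.
Proof. by move=> h; have := path_le w d0 dtri j (j' - j); rewrite subnKC. Qed.

Lemma lenx_per (R : realFieldType) (T : Type) (d : T -> T -> R) (w : nat -> T) N
  (wper : forall k, w (k + N)%N = w k) k :
  lenx d w (k + N)%N = lenx d w k + lenx d w N.
Proof.
elim: k => [|k IH]; first by rewrite add0n lenx0 add0r.
rewrite addSn !lenxS IH -addSn !wper; lra.
Qed.

Lemma back_le (R : realFieldType) (T : Type) (d : T -> T -> R) (w : nat -> T) N
  (d0 : forall x, d x x = 0) (dtri : forall x y z, d x z <= d x y + d y z)
  (dsym : forall x y, d x y = d y x)
  (wper : forall k, w (k + N)%N = w k) j j' :
  (j <= j')%N -> (j' <= j + N)%N ->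
  d (w j) (w j') <= lenx d w N - (lenx d w j' - lenx d w j).
Proof.
move=> h1 h2.
have := path_le' w d0 dtri h2; rewrite wper lenx_per // dsym; lra.
Qed.

Lemma d_ge0 (R : realFieldType) (T : Type) (d : T -> T -> R)
  (d0 : forall x, d x x = 0) (dtri : forall x y z, d x z <= d x y + d y z)
  (dsym : forall x y, d x y = d y x) x y : 0 <= d x y.
Proof. have := dtri x y x; rewrite d0 (dsym y x); lra. Qed.

Lemma telesc (R : realFieldType) (f : nat -> R) N :
  \sum_(t < N) (f t - f t.+1) = f 0%N - f N.
Proof.
elim: N => [|N IH]; first by rewrite big_ord0 subrr.
rewrite big_ord_recr /= IH; lra.
Qed.

Lemma rot (R : realFieldType) (G : nat -> R) N (Gper : forall k, G (k + N)%N = G k) m :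
  \sum_(k < N) G k = \sum_(k < N) G (m + k)%N.
Proof.
elim: m => [|m IH]; first by apply: eq_bigr => i _; rewrite add0n.
have E : forall F : nat -> R, F 0%N + \sum_(k < N) F k.+1 = \sum_(k < N) F k + F N.
  move=> F; have h1 := big_ord_recr N (fun k : 'I_N.+1 => F k).
  have h2 := big_ord_recl N (fun k : 'I_N.+1 => F k).
  simpl in h1, h2. rewrite -h1 h2. by [].
have H := E (fun k => G (m + k)%N); simpl in H.
rewrite addn0 Gper -IH in H.
rewrite [RHS](eq_bigr (fun k : 'I_N => G (m + k.+1)%N)); last by move=> i _; rewrite addSn addnS.
lra.
Qed.

Lemma trap (R : realFieldType) (T : Type) (d : T -> T -> R) (w : nat -> T) N
  (d0 : forall x, d x x = 0) (dtri : forall x y z, d x z <= d x y + d y z)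
  (dsym : forall x y, d x y = d y x)
  (wper : forall k, w (k + N)%N = w k) m r :
  0 <= r -> 2 * r <= lenx d w N ->
  2 * r ^+ 2 <= \sum_(k < N) d (w k) (w k.+1) *
     (phi r (d (w m) (w k)) + phi r (d (w m) (w k.+1))).
Proof.
move=> r0 rL.
set L := lenx d w N.
pose G k := d (w k) (w k.+1) * (phi r (d (w m) (w k)) + phi r (d (w m) (w k.+1))).
have Gper : forall k, G (k + N)%N = G k.
  by move=> k; rewrite /G -addSn !wper.
rewrite (rot Gper m).
pose tau t := lenx d w (m + t)%N - lenx d w m.
pose psi y := phi r y ^+ 2 - phi r (L - y) ^+ 2.
have step : forall t : 'I_N, psi (tau t) - psi (tau t.+1) <= G (m + t)%N.
  move=> t.
  have tN : (t <= N)%N by apply: ltnW.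
  have tN' : (t.+1 <= N)%N by [].
  have E : tau t.+1 - tau t = d (w (m + t)%N) (w (m + t).+1).
    by rewrite /tau addnS lenxS; ring.
  rewrite /G -E -addnS.
  apply: interval_ineq.
  - have := d_ge0 d0 dtri dsym (w (m + t)%N) (w (m + t).+1); lra.
  - apply: h_ge => //.
    + by have := path_le w d0 dtri m t.
    + have hh : (m + t <= m + N)%N by rewrite leq_add2l.
      by have := back_le d0 dtri dsym wper (leq_addr t m) hh.
  - apply: h_ge => //.
    + by have := path_le w d0 dtri m t.+1.
    + have hh : (m + t.+1 <= m + N)%N by rewrite leq_add2l.
      by have := back_le d0 dtri dsym wper (leq_addr t.+1 m) hh.
have S : \sum_(t < N) (psi (tau t) - psi (tau t.+1)) <= \sum_(t < N) G (m + t)%N.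
  by apply: ler_sum => t _; exact: step.
have t0 : tau 0%N = 0 by rewrite /tau addn0 subrr.
have tNL : tau N = L by rewrite /tau (lenx_per d wper) // /L; ring.
move: S; rewrite (telesc (fun t => psi (tau t))) t0 tNL.
rewrite /psi subrr subr0.
have p0 : phi r 0 = r by case: (phiE r 0) => [[h ->]|[h ->]]; lra.
have rL' : r <= L by rewrite /L; lra.
have pL : phi r L = 0 by case: (phiE r L) => [[h ->]|[h ->]]; lra.
rewrite p0 pL; lra.
Qed.

Lemma listP (R : realFieldType) (T : Type) (d : T -> T -> R) (w : nat -> T)
  (d0 : forall x, d x x = 0) (dtri : forall x y z, d x z <= d x y + d y z)
  (s : nat -> R) N
  (pair : forall j j', (j < j')%N -> (j' < N)%N -> 0 < s j -> 0 < s j' ->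
      s j + s j' <= d (w j) (w j')) :
  forall S j, path ltn j S -> (forall i, i \in j :: S -> (i < N)%N && (0 < s i)) ->
  2 * \sum_(i <- j :: S) s i <=
    lenx d w (last j S) - lenx d w j + s j + s (last j S).
Proof.
elim => [|a S IH] j /=.
  by move=> _ _; rewrite big_cons big_nil; lra.
move=> /andP[ja pa] H.
have H' : forall i, i \in a :: S -> (i < N)%N && (0 < s i).
  by move=> i hi; apply: H; rewrite inE hi orbT.
have IH' := IH a pa H'.
have /andP[aN sa] : (a < N)%N && (0 < s a) by apply: H'; rewrite inE eqxx.
have /andP[_ sj] : (j < N)%N && (0 < s j) by apply: H; rewrite inE eqxx.
have P1 := pair j a ja aN sj sa.
have P2 := path_le' w d0 dtri (ltnW ja).
rewrite big_cons; lra.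
Qed.

Lemma lastlt (j : nat) S : path ltn j S -> S != [::] -> (j < last j S)%N.
Proof.
elim: S j => [|a S IH] j //= /andP[ja pa] _.
case: S IH pa => [|b S] IH pa //=.
by apply: ltn_trans ja (IH a pa _).
Qed.

Lemma lenx_ge0 (R : realFieldType) (T : Type) (d : T -> T -> R) (w : nat -> T)
  (d0 : forall x, d x x = 0) (dtri : forall x y z, d x z <= d x y + d y z)
  (dsym : forall x y, d x y = d y x) N : 0 <= lenx d w N.
Proof. by apply: sumr_ge0 => i _; apply: d_ge0. Qed.

Lemma packP (R : realFieldType) (T : Type) (d : T -> T -> R) (w : nat -> T) N
  (d0 : forall x, d x x = 0) (dtri : forall x y z, d x z <= d x y + d y z)
  (dsym : forall x y, d x y = d y x)
  (wper : forall k, w (k + N)%N = w k)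
  (s : nat -> R)
  (s0 : forall j, 0 <= s j)
  (pair : forall j j', (j < j')%N -> (j' < N)%N -> 0 < s j -> 0 < s j' ->
      s j + s j' <= d (w j) (w j'))
  (half : forall j, (j < N)%N -> 2 * s j <= lenx d w N) :
  2 * \sum_(j < N) s j <= lenx d w N.
Proof.
rewrite -(big_mkord xpredT s) (bigID (fun j => 0 < s j)) /=.
rewrite [X in _ + X]big1 ?addr0; last first.
  by move=> j; rewrite -leNgt => h1; have h2 := s0 j; apply/eqP; rewrite eq_le h1 h2.
rewrite -big_filter.
set S := filter _ _.
have srt : sorted ltn S by apply: sorted_filter; [exact: ltn_trans | exact: iota_ltn_sorted].
have mem : forall i, i \in S -> (i < N)%N && (0 < s i).
  move=> i; rewrite mem_filter mem_index_iota /=.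
  by rewrite andbC.
have L0 := lenx_ge0 w d0 dtri dsym N.
case E: S srt mem => [|j S'] srt mem.
  by rewrite big_nil; lra.
apply: le_trans (listP d0 dtri pair srt mem) _.
have /andP[jN sj] := mem j (mem_head _ _).
case: (S' =P [::]) => [-> /= | ne].
  by have := half j jN; lra.
have jl := lastlt srt (introN eqP ne).
have /andP[lN sl] : (last j S' < N)%N && (0 < s (last j S')).
  by apply: mem; apply: mem_last.
have P1 := pair _ _ jl lN sj sl.
have lj : (last j S' <= j + N)%N by apply: leq_trans (ltnW lN) (leq_addl _ _).
have P2 := back_le d0 dtri dsym wper (ltnW jl) lj.
lra.
Qed.
Lemma cs (R : realFieldType) N (r : 'I_N -> R) :
  (\sum_i r i) ^+ 2 <= N%:R * \sum_i r i ^+ 2.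
Proof.
have H : 0 <= \sum_i \sum_j (r i - r j) ^+ 2.
  by apply: sumr_ge0 => i _; apply: sumr_ge0 => j _; apply: sqr_ge0.
have E : forall i, \sum_j (r i - r j) ^+ 2 =
   N%:R * r i ^+ 2 + \sum_j r j ^+ 2 - 2 * r i * \sum_j r j.
  move=> i.
  rewrite (eq_bigr (fun j => r i ^+ 2 + (r j ^+ 2 - 2 * r i * r j))); last first.
    by move=> j _; ring.
  rewrite big_split /= sumr_const card_ord sumrB -mulr_sumr mulr_natl; ring.
rewrite (eq_bigr _ (fun i _ => E i)) in H.
rewrite sumrB big_split /= -mulr_sumr sumr_const card_ord -mulr_suml in H.
rewrite -mulr_natr -mulr_sumr in H; rewrite expr2; nra.
Qed.

Lemma test (n : nat) (i : 'I_n.+1) : (2 <= n)%N -> (i.+1 %% n.+1)%N != i.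
Proof.
move=> h; apply/eqP => e; have lt := ltn_ord i.
case: (ltnP i n) => hin.
  by rewrite modn_small in e; lia.
have ein : nat_of_ord i = n by lia.
by rewrite ein modnn in e; lia.
Qed.

Lemma phi_ge0 (R : realFieldType) (r D : R) : 0 <= phi r D.
Proof. by case: (phiE r D) => [[_ ->]|[h ->]]. Qed.

Lemma phi_le (R : realFieldType) (r D : R) : 0 <= r -> 0 <= D -> phi r D <= r.
Proof. by move=> h1 h2; case: (phiE r D) => [[_ ->]|[h ->]]; lra. Qed.

Lemma key (R : rcfType) (n : nat) (c : 'I_n.+1 -> 'I_n.+1 -> R) (Tstar T' : 'S_n.+1) :
  (2 <= n)%N -> metric_cost c -> two_optimal c T' ->
  2 * \sum_i (c (T' i) (T' (ordS i))) ^+ 2 <= (tour_len c Tstar) ^+ 2.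
Proof.
move=> n2 [cge0 [csym ctri]] opt.
pose d u v := if u == v then 0 else c u v.
have d0 : forall x, d x x = 0 by move=> x; rewrite /d eqxx.
have dE : forall x y, x != y -> d x y = c x y by move=> x y h; rewrite /d (negbTE h).
have dge : forall x y, 0 <= d x y.
  by move=> x y; rewrite /d; case: eqVneq => // h; apply: cge0.
have dsym : forall x y, d x y = d y x.
  move=> x y; rewrite /d eq_sym; case: eqVneq => // h; apply: csym; by rewrite eq_sym.
have dtri : forall x y z, d x z <= d x y + d y z.
  move=> x y z.
  case: (eqVneq x z) => [<-|xz]; first by rewrite d0; have := dge x y; have := dge y x; lra.
  case: (eqVneq x y) => [<-|xy]; first by rewrite d0 add0r.
  case: (eqVneq y z) => [<-|yz]; first by rewrite d0 addr0.
  by rewrite !dE //; apply: ctri.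
pose w k := Tstar (inord (k %% n.+1)).
have wper : forall k, w (k + n.+1)%N = w k by move=> k; rewrite /w modnDr.
have wi : forall i : 'I_n.+1, w i = Tstar i by move=> i; rewrite /w modn_small // inord_val.
have oS : forall i : 'I_n.+1, ordS i != i.
  move=> i; apply/negP => /eqP /(congr1 val) /= h.
  by move: (test i n2); rewrite h eqxx.
have wS : forall i : 'I_n.+1, w i.+1 = Tstar (ordS i).
  by move=> i; rewrite /w; congr (Tstar _); apply: val_inj; rewrite /= inordK // ltn_pmod.
have Lc : tour_len c Tstar = lenx d w n.+1.
  rewrite /tour_len /lenx; apply: eq_bigr => i _; rewrite wi wS dE //.
  by rewrite (inj_eq perm_inj) eq_sym oS.
rewrite Lc; set L := lenx d w n.+1.
have wv : forall u, w (val ((Tstar^-1)%g u)) = u by move=> u; rewrite wi permKV.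
have half2 : forall u v, 2 * d u v <= L.
  move=> u v; rewrite -(wv u) -(wv v).
  set j := val _; set j' := val _.
  have jN : (j < n.+1)%N by apply: ltn_ord.
  have jN' : (j' < n.+1)%N by apply: ltn_ord.
  wlog h : j j' jN jN' / (j <= j')%N.
    move=> W; case: (leqP j j') => h; first exact: W.
    by rewrite dsym; apply: W => //; apply: ltnW.
  have P1 := path_le' w d0 dtri h.
  have P2 := back_le d0 dtri dsym wper h (leq_trans (ltnW jN') (leq_addl _ _)).
  rewrite /L; lra.
pose r i := d (T' i) (T' (ordS i)).
have rE : forall i, c (T' i) (T' (ordS i)) = r i.
  by move=> i; rewrite /r dE // (inj_eq perm_inj) eq_sym oS.
under eq_bigr do rewrite rE.
pose b i := T' (ordS i).
pose g i q := phi (r i) (d (b i) q).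
have tr : forall i, 2 * r i ^+ 2 <= \sum_(k < n.+1) d (w k) (w k.+1) * (g i (w k) + g i (w k.+1)).
  move=> i.
  have := trap d0 dtri dsym wper (val ((Tstar^-1)%g (b i))) (dge _ _) (half2 (T' i) (T' (ordS i))).
  by rewrite wv.
have pk : forall q, 2 * \sum_i g i q <= L.
  move=> q.
  pose s j := g ((T'^-1)%g (w j)) q.
  have -> : \sum_i g i q = \sum_(j < n.+1) s j.
    rewrite (reindex_inj (h := fun i => (T'^-1)%g (Tstar i))); last first.
      by move=> x y /perm_inj /perm_inj.
    by apply: eq_bigr => j _; rewrite /s wi.
  apply: (packP d0 dtri dsym wper)...
  - by move=> j; apply: phi_ge0.
  - move=> j j' jj jN sj sj'.
    have jN0 : (j < n.+1)%N by apply: ltn_trans jj jN.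
    have wne : w j != w j'.
      apply/eqP => /perm_inj /(congr1 val) /=; rewrite !inordK ?ltn_pmod // !modn_small // => e; lia.
    rewrite /s in sj sj' *.
    set i := (T'^-1)%g (w j) in sj *; set i' := (T'^-1)%g (w j') in sj' *.
    have Ti : T' i = w j by rewrite permKV.
    have Ti' : T' i' = w j' by rewrite permKV.
    have ine : i != i' by rewrite (inj_eq perm_inj).
    have Tne : T' i != T' i' by rewrite Ti Ti'.
    have bne : b i != b i' by rewrite /b (inj_eq perm_inj) (inj_eq (@ordS_inj _)).
    have O : r i + r i' <= d (T' i) (T' i') + d (b i) (b i').
      by have := opt i i' ine; rewrite !rE -(dE _ _ Tne) -(dE _ _ bne).
    have T3 := dtri (b i) q (b i'). rewrite (dsym q (b i')) in T3.
    have e1 : g i q = r i - d (b i) q.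
      by move: sj; rewrite /g; case: (phiE (r i) (d (b i) q)) => [[_ ->]|[_ ->]] //; rewrite ltxx.
    have e2 : g i' q = r i' - d (b i') q.
      by move: sj'; rewrite /g; case: (phiE (r i') (d (b i') q)) => [[_ ->]|[_ ->]] //; rewrite ltxx.
    rewrite -Ti -Ti' e1 e2; lra.
  - move=> j _; have := half2 (T' ((T'^-1)%g (w j))) (b ((T'^-1)%g (w j))).
    have := phi_le (dge (T' ((T'^-1)%g (w j))) (b ((T'^-1)%g (w j)))) (dge (b ((T'^-1)%g (w j))) q).
    rewrite /s /g /r /b -/L; lra.
have A : 2 * \sum_i r i ^+ 2 <= \sum_i \sum_(k < n.+1) d (w k) (w k.+1) * (g i (w k) + g i (w k.+1)).
  by rewrite mulr_sumr; apply: ler_sum => i _; apply: tr.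
apply: le_trans A _; rewrite exchange_big /=.
have B : forall k : 'I_n.+1, \sum_i d (w k) (w k.+1) * (g i (w k) + g i (w k.+1)) <= d (w k) (w k.+1) * L.
  move=> k; rewrite -mulr_sumr big_split /=; apply: ler_wpM2l; first exact: dge.
  by have := pk (w k); have := pk (w k.+1); lra.
apply: le_trans (ler_sum _ (fun k _ => B k)) _.
by rewrite -mulr_suml expr2.
Qed.

Unset Implicit Arguments. Set Strict Implicit. Set Printing Implicit Defensive.

Theorem mainTheorem3 (R : rcfType) (n : nat) (c : 'I_n -> 'I_n -> R)
  (Tstar T' : 'S_n) :
  (3 <= n)%N ->
  metric_cost c ->
  (forall T : 'S_n, tour_len c Tstar <= tour_len c T) ->
  two_optimal c T' ->
  tour_len c T' <= Num.sqrt (n%:R / 2) * tour_len c Tstar.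
Proof.
case: n c Tstar T' => [|n] c Tstar T' //.
move=> n2 mc _ opt.
have K := key Tstar n2 mc opt.
have CS := cs (fun i => c (T' i) (T' (ordS i))).
rewrite -/(tour_len c T') in CS K.
set X := tour_len c T' in CS *.
set L := tour_len c Tstar in K *.
set Q := \sum_i _ in CS K.
have L0 : 0 <= L.
  apply: sumr_ge0 => i _; case: mc => cge0 _; apply: cge0.
  rewrite (inj_eq perm_inj); apply/eqP => /(congr1 val) /= h.
  by move: (test i n2); rewrite -h eqxx.
have N0 : (0 : R) <= n.+1%:R by apply: ler0n.
have H1 : n.+1%:R * (2 * Q) <= n.+1%:R * L ^+ 2 by apply: ler_wpM2l.
have H2 : X ^+ 2 <= n.+1%:R / 2 * L ^+ 2 by lra.
apply: le_trans (ler_norm X) _.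
rewrite -sqrtr_sqr.
apply: le_trans (ler_wsqrtr H2) _.
rewrite sqrtrM ?sqrtr_sqr ?ger0_norm //.
by apply: divr_ge0.
Qed.
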